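(* Let $\lambda_j,\mu_j$ be real numbers with $0\le\lambda_j\le\mu_j$ for $j=0,\dots,n$. Then $\Phi_{(\lambda_0,\dots,\lambda_n)}(x)$ is real for all $x\in\mathbb{R}$, $\Phi_{(\lambda_0,\dots,\lambda_n)}(x)>0$ for all $x>0$, and $$\left|\Phi_{(\lambda_0,\dots,\lambda_n)}(z)\right|\le\Phi_{(\mu_0,\dots,\mu_n)}(|z|)\quad\text{for all }z\in\mathbb{C}.$$
   Context: For $\lambda_0,\dots,\lambda_n\in\mathbb{C}$ the fundamental function is the entire function $\Phi_{(\lambda_0,\dots,\lambda_n)}(z)=\frac{1}{2\pi i}\int_{|w|=R}\frac{e^{zw}}{(w-\lambda_0)\cdots(w-\lambda_n)}\,dw$, where $R>\max_j|\lambda_j|$ and the circle is positively oriented. *)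

(* Defs.v *)
From Stdlib Require Import Reals ClassicalEpsilon.
Open Scope R_scope.

Definition Cplx := (R * R)%type.
Definition RtoC (x : R) : Cplx := (x, 0).
Definition Re (z : Cplx) : R := fst z.
Definition Im (z : Cplx) : R := snd z.
Definition Cadd (z w : Cplx) : Cplx := (fst z + fst w, snd z + snd w).
Definition Csub (z w : Cplx) : Cplx := (fst z - fst w, snd z - snd w).
Definition Cmul (z w : Cplx) : Cplx :=
  (fst z * fst w - snd z * snd w, fst z * snd w + snd z * fst w).
Definition Cnorm (z : Cplx) : R := sqrt (fst z * fst z + snd z * snd z).
Definition Cinv (z : Cplx) : Cplx :=
  let d := fst z * fst z + snd z * snd z in (fst z / d, - snd z / d).
Definition Cdiv (z w : Cplx) : Cplx := Cmul z (Cinv w).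
Definition Ci : Cplx := (0, 1).
Definition Cexp (z : Cplx) : Cplx := (exp (fst z) * cos (snd z), exp (fst z) * sin (snd z)).

(* Total Riemann integral on [a,b]: RiemannInt if integrable, 0 otherwise. *)
Definition RInt (f : R -> R) (a b : R) : R :=
  match excluded_middle_informative (inhabited (Riemann_integrable f a b)) with
  | left h => RiemannInt (epsilon h (fun _ => True))
  | right _ => 0
  end.

(* Contour integral of f over the positively oriented circle |w| = r,
   parametrized by gamma(t) = r e^{it}, t in [0, 2 pi]:
   int_0^{2pi} f(gamma t) gamma'(t) dt, gamma'(t) = i r e^{it}. *)
Definition circle_integral (f : Cplx -> Cplx) (r : R) : Cplx :=
  let gamma t := Cmul (RtoC r) (Cexp (0, t)) in
  let h t := Cmul (f (gamma t)) (Cmul Ci (gamma t)) in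
  (RInt (fun t => Re (h t)) 0 (2 * PI), RInt (fun t => Im (h t)) 0 (2 * PI)).

Fixpoint max_abs (lam : nat -> Cplx) (n : nat) : R :=
  match n with
  | O => Cnorm (lam O)
  | S m => Rmax (max_abs lam m) (Cnorm (lam (S m)))
  end.

Fixpoint prod_lin (lam : nat -> Cplx) (n : nat) (w : Cplx) : Cplx :=
  match n with
  | O => Csub w (lam O)
  | S m => Cmul (prod_lin lam m w) (Csub w (lam (S m)))
  end.

(* Fundamental function Phi_(lam_0..lam_n)(z)
   = 1/(2 pi i) * int_{|w|=R} e^{zw} / prod_j (w - lam_j) dw,
   with the concrete choice R = max_j |lam_j| + 1 (> max_j |lam_j|). *)
Definition Phi (lam : nat -> Cplx) (n : nat) (z : Cplx) : Cplx :=
  Cmul (Cinv (Cmul (RtoC (2 * PI)) Ci))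
       (circle_integral (fun w => Cdiv (Cexp (Cmul z w)) (prod_lin lam n w))
                        (max_abs lam n + 1)).

(* Main.v *)
From Stdlib Require Import Reals Lra Lia ZArith ClassicalEpsilon.
From Coquelicot Require Import Coquelicot.
Require Import Defs.
Open Scope R_scope.

Definition CI (F : R -> Cplx) : Cplx :=
  (RInt.RInt (fun t => fst (F t)) 0 (2*PI), RInt.RInt (fun t => snd (F t)) 0 (2*PI)).
Definition ccont (F : R -> Cplx) :=
  forall t, continuous (fun s => fst (F s)) t /\ continuous (fun s => snd (F s)) t.
Definition E (th : R) : Cplx := (cos th, sin th).

Lemma rcont_plus (f g : R -> R) t : continuous f t -> continuous g t -> continuous (fun s => f s + g s) t.
Proof. intros; apply (continuous_plus f g); auto. Qed.
Lemma rcont_mult (f g : R -> R) t : continuous f t -> continuous g t -> continuous (fun s => f s * g s) t.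
Proof. intros; apply (continuous_mult f g); auto. Qed.
Lemma rcont_opp (f : R -> R) t : continuous f t -> continuous (fun s => - f s) t.
Proof. intros; apply (continuous_opp f); auto. Qed.
Lemma rcont_minus (f g : R -> R) t : continuous f t -> continuous g t -> continuous (fun s => f s - g s) t.
Proof. intros; unfold Rminus; apply rcont_plus; auto; apply rcont_opp; auto. Qed.
Lemma rcont_inv (f : R -> R) t : continuous f t -> f t <> 0 -> continuous (fun s => / f s) t.
Proof. intros. apply (continuous_comp f Rinv); auto. apply continuous_Rinv; auto. Qed.
Lemma rcont_div (f g : R -> R) t : continuous f t -> continuous g t -> g t <> 0 -> continuous (fun s => f s / g s) t.
Proof. intros; unfold Rdiv; apply rcont_mult; auto; apply rcont_inv; auto. Qed.
Lemma rcont_const (c t : R) : continuous (fun _ : R => c) t.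
Proof. apply continuous_const. Qed.
Lemma rcont_id (t : R) : continuous (fun s : R => s) t.
Proof. apply continuous_id. Qed.

Lemma ccont_add F G : ccont F -> ccont G -> ccont (fun t => Cadd (F t) (G t)).
Proof. intros HF HG t; destruct (HF t), (HG t); simpl; split; apply rcont_plus; auto. Qed.
Lemma ccont_sub F G : ccont F -> ccont G -> ccont (fun t => Csub (F t) (G t)).
Proof. intros HF HG t; destruct (HF t), (HG t); simpl; split; apply rcont_minus; auto. Qed.
Lemma ccont_mul F G : ccont F -> ccont G -> ccont (fun t => Cmul (F t) (G t)).
Proof. intros HF HG t; destruct (HF t), (HG t); simpl; split.
  apply rcont_minus; apply rcont_mult; auto.
  apply rcont_plus; apply rcont_mult; auto. Qed.
Lemma ccont_const c : ccont (fun _ => c).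
Proof. intros t; split; apply rcont_const. Qed.
Lemma ccont_inv F : ccont F -> (forall t, F t <> (0,0)) -> ccont (fun t => Cinv (F t)).
Proof. intros HF Hn t; destruct (HF t); unfold Cinv; simpl.
  assert (fst (F t) * fst (F t) + snd (F t) * snd (F t) <> 0).
  { intro Hz. apply (Hn t). destruct (F t) as [a b]; simpl in *.
    assert (a = 0) by nra. assert (b = 0) by nra. subst; auto. }
  split; apply rcont_div; auto; try apply rcont_opp; auto;
  apply rcont_plus; apply rcont_mult; auto. Qed.
Lemma ccont_E a : ccont (fun t => E (a * t)).
Proof. intros t; unfold E; simpl; split.
  apply continuous_cos_comp; apply rcont_mult; [apply rcont_const|apply rcont_id].
  apply (continuous_comp (fun s => a * s) sin). apply rcont_mult; [apply rcont_const|apply rcont_id].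
  apply continuous_sin. Qed.
Lemma ccont_Cexp F : ccont F -> ccont (fun t => Cexp (F t)).
Proof. intros HF t; destruct (HF t); unfold Cexp; simpl; split; apply rcont_mult.
  apply continuous_exp_comp; auto. apply continuous_cos_comp; auto.
  apply continuous_exp_comp; auto. apply (continuous_comp (fun s => snd (F s)) sin); auto. apply continuous_sin. Qed.

Lemma rex (f : R -> R) : (forall t, continuous f t) -> ex_RInt f 0 (2*PI).
Proof. intros H; apply (ex_RInt_continuous (V:=R_CompleteNormedModule)); intros; apply H. Qed.
Lemma ccont_ex1 F : ccont F -> ex_RInt (fun t => fst (F t)) 0 (2*PI).
Proof. intros H; apply rex; intros t; apply H. Qed.
Lemma ccont_ex2 F : ccont F -> ex_RInt (fun t => snd (F t)) 0 (2*PI).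
Proof. intros H; apply rex; intros t; apply H. Qed.

Lemma rint_plus (f g : R -> R) : ex_RInt f 0 (2*PI) -> ex_RInt g 0 (2*PI) ->
  RInt.RInt (fun t => f t + g t) 0 (2*PI) = RInt.RInt f 0 (2*PI) + RInt.RInt g 0 (2*PI).
Proof. intros; exact (RInt_plus f g _ _ H H0). Qed.
Lemma rint_minus (f g : R -> R) : ex_RInt f 0 (2*PI) -> ex_RInt g 0 (2*PI) ->
  RInt.RInt (fun t => f t - g t) 0 (2*PI) = RInt.RInt f 0 (2*PI) - RInt.RInt g 0 (2*PI).
Proof. intros; exact (RInt_minus f g _ _ H H0). Qed.
Lemma rint_scal (f : R -> R) c : ex_RInt f 0 (2*PI) ->
  RInt.RInt (fun t => c * f t) 0 (2*PI) = c * RInt.RInt f 0 (2*PI).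
Proof. intros; exact (RInt_scal f _ _ c H). Qed.
Lemma rint_ext (f g : R -> R) : (forall t, f t = g t) -> RInt.RInt f 0 (2*PI) = RInt.RInt g 0 (2*PI).
Proof. intros; apply RInt_ext; intros; auto. Qed.

Lemma CI_ext F G : (forall t, F t = G t) -> CI F = CI G.
Proof. intros H; unfold CI; f_equal; apply rint_ext; intros; rewrite H; auto. Qed.
Lemma CI_add F G : ccont F -> ccont G -> CI (fun t => Cadd (F t) (G t)) = Cadd (CI F) (CI G).
Proof. intros HF HG; unfold CI, Cadd; simpl; f_equal.
  apply (rint_plus (fun t => fst (F t)) (fun t => fst (G t))); apply ccont_ex1; auto.
  apply (rint_plus (fun t => snd (F t)) (fun t => snd (G t))); apply ccont_ex2; auto.
Qed.
Lemma CI_sub F G : ccont F -> ccont G -> CI (fun t => Csub (F t) (G t)) = Csub (CI F) (CI G).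
Proof. intros HF HG; unfold CI, Csub; simpl; f_equal.
  apply (rint_minus (fun t => fst (F t)) (fun t => fst (G t))); apply ccont_ex1; auto.
  apply (rint_minus (fun t => snd (F t)) (fun t => snd (G t))); apply ccont_ex2; auto.
Qed.
Lemma CI_cmul c F : ccont F -> CI (fun t => Cmul c (F t)) = Cmul c (CI F).
Proof. intros HF; unfold CI, Cmul; simpl; f_equal;
  assert (e1 := ccont_ex1 F HF); assert (e2 := ccont_ex2 F HF).
  - assert (e3 : ex_RInt (fun t => fst c * fst (F t)) 0 (2*PI)) by (apply rex; intros t; apply rcont_mult; [apply rcont_const| apply HF]).
    assert (e4 : ex_RInt (fun t => snd c * snd (F t)) 0 (2*PI)) by (apply rex; intros t; apply rcont_mult; [apply rcont_const| apply HF]).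
    pose proof (rint_minus _ _ e3 e4) as R1.
    pose proof (rint_scal _ (fst c) e1) as R2.
    pose proof (rint_scal _ (snd c) e2) as R3.
    simpl in R1, R2, R3. rewrite R1, R2, R3. reflexivity.
  - assert (e3 : ex_RInt (fun t => fst c * snd (F t)) 0 (2*PI)) by (apply rex; intros t; apply rcont_mult; [apply rcont_const| apply HF]).
    assert (e4 : ex_RInt (fun t => snd c * fst (F t)) 0 (2*PI)) by (apply rex; intros t; apply rcont_mult; [apply rcont_const| apply HF]).
    pose proof (rint_plus _ _ e3 e4) as R1.
    pose proof (rint_scal _ (fst c) e2) as R2.
    pose proof (rint_scal _ (snd c) e1) as R3.
    simpl in R1, R2, R3. rewrite R1, R2, R3. reflexivity.
Qed.

Lemma rint_bound (f : R -> R) K : ex_RInt f 0 (2*PI) -> (forall t, Rabs (f t) <= K) ->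
  Rabs (RInt.RInt f 0 (2*PI)) <= 2*PI*K.
Proof. intros H1 H2. pose proof PI_RGT_0 as HP. replace (2*PI*K) with ((2*PI - 0)*K) by ring.
  apply abs_RInt_le_const; auto. lra. Qed.

Lemma Cnorm_Cmod z : Cnorm z = Cmod z.
Proof. unfold Cnorm, Cmod. f_equal. simpl. ring. Qed.
Lemma Cnorm_ge0 z : 0 <= Cnorm z.
Proof. apply sqrt_pos. Qed.
Lemma Rabs_fst_le z : Rabs (fst z) <= Cnorm z.
Proof. unfold Cnorm. rewrite <- sqrt_Rsqr_abs. apply sqrt_le_1_alt. unfold Rsqr.
  pose proof (Rle_0_sqr (snd z)). unfold Rsqr in H. lra. Qed.
Lemma Rabs_snd_le z : Rabs (snd z) <= Cnorm z.
Proof. unfold Cnorm. rewrite <- sqrt_Rsqr_abs. apply sqrt_le_1_alt. unfold Rsqr.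
  pose proof (Rle_0_sqr (fst z)). unfold Rsqr in H. lra. Qed.
Lemma Cnorm_le_sum z : Cnorm z <= Rabs (fst z) + Rabs (snd z).
Proof. unfold Cnorm. pose proof (Rabs_pos (fst z)); pose proof (Rabs_pos (snd z)).
  rewrite <- (sqrt_Rsqr (Rabs (fst z) + Rabs (snd z))) by lra.
  apply sqrt_le_1_alt. unfold Rsqr.
  pose proof (Rsqr_abs (fst z)); pose proof (Rsqr_abs (snd z)). unfold Rsqr in *. nra. Qed.
Lemma Cnorm_mul a b : Cnorm (Cmul a b) = Cnorm a * Cnorm b.
Proof. rewrite !Cnorm_Cmod. apply Cmod_mult. Qed.
Lemma Cnorm_add a b : Cnorm (Cadd a b) <= Cnorm a + Cnorm b.
Proof. rewrite !Cnorm_Cmod. apply Cmod_triangle. Qed.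
Lemma Csub_Cadd a b : Csub a b = Cadd a (Cmul (RtoC (-1)) b).
Proof. destruct a, b; unfold Csub, Cadd, Cmul, RtoC; simpl; f_equal; ring. Qed.
Lemma Cnorm_opp b : Cnorm (Cmul (RtoC (-1)) b) = Cnorm b.
Proof. rewrite Cnorm_mul. unfold Cnorm at 1, RtoC; simpl.
  replace (-1 * -1 + 0 * 0) with 1 by ring. rewrite sqrt_1; ring. Qed.
Lemma Cnorm_sub a b : Cnorm (Csub a b) <= Cnorm a + Cnorm b.
Proof. rewrite Csub_Cadd. eapply Rle_trans. apply Cnorm_add. rewrite Cnorm_opp; lra. Qed.
Lemma Cnorm_sub_sym a b : Cnorm (Csub a b) = Cnorm (Csub b a).
Proof. unfold Cnorm, Csub; simpl. f_equal; ring. Qed.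
Lemma Cnorm_RtoC x : Cnorm (RtoC x) = Rabs x.
Proof. unfold Cnorm, RtoC; simpl. replace (x*x+0*0) with (Rsqr x) by (unfold Rsqr; ring).
  apply sqrt_Rsqr_abs. Qed.
Lemma Cnorm_E th : Cnorm (E th) = 1.
Proof. unfold Cnorm, E; simpl. rewrite <- sqrt_1. f_equal.
  pose proof (sin2_cos2 th). unfold Rsqr in H. lra. Qed.
Lemma Cnorm_triangle3 a b c : Cnorm (Csub a c) <= Cnorm (Csub a b) + Cnorm (Csub b c).
Proof. replace (Csub a c) with (Cadd (Csub a b) (Csub b c)).
  apply Cnorm_add. destruct a, b, c; unfold Csub, Cadd; simpl; f_equal; ring. Qed.
Lemma Cinv_Cinv z : Defs.Cinv z = Complex.Cinv z.
Proof. unfold Defs.Cinv, Complex.Cinv. simpl. f_equal; f_equal; ring. Qed.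
Lemma Cnorm_inv z : z <> (0,0) -> Cnorm (Defs.Cinv z) = / Cnorm z.
Proof. intros H. rewrite Cinv_Cinv, !Cnorm_Cmod. apply Cmod_inv. exact H. Qed.
Lemma Cnorm_zero z : Cnorm z = 0 -> z = (0,0).
Proof. rewrite Cnorm_Cmod. apply Cmod_eq_0. Qed.

Lemma CI_bound F K : ccont F -> (forall t, Cnorm (F t) <= K) -> Cnorm (CI F) <= 4*PI*K.
Proof. intros HF HK. eapply Rle_trans. apply Cnorm_le_sum. unfold CI; simpl.
  assert (Rabs (RInt.RInt (fun t => fst (F t)) 0 (2*PI)) <= 2*PI*K).
  { apply rint_bound. apply ccont_ex1; auto. intros t; eapply Rle_trans. apply Rabs_fst_le. auto. }
  assert (Rabs (RInt.RInt (fun t => snd (F t)) 0 (2*PI)) <= 2*PI*K).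
  { apply rint_bound. apply ccont_ex2; auto. intros t; eapply Rle_trans. apply Rabs_snd_le. auto. }
  lra. Qed.

Fixpoint csum (f : nat -> Cplx) (N : nat) : Cplx :=
  match N with O => f O | S M => Cadd (csum f M) (f (S M)) end.

Lemma ccont_csum (phi : nat -> R -> Cplx) N : (forall k, ccont (phi k)) ->
  ccont (fun t => csum (fun k => phi k t) N).
Proof. intros H; induction N; simpl. apply H. apply ccont_add; auto. Qed.
Lemma CI_csum (phi : nat -> R -> Cplx) N : (forall k, ccont (phi k)) ->
  CI (fun t => csum (fun k => phi k t) N) = csum (fun k => CI (phi k)) N.
Proof. intros H; induction N; simpl. auto.
  rewrite CI_add; auto. rewrite IHN; auto. apply ccont_csum; auto. Qed.
Lemma csum_mul_r (f : nat -> Cplx) b N : Cmul (csum f N) b = csum (fun k => Cmul (f k) b) N.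
Proof. induction N; simpl; auto. rewrite <- IHN. destruct (csum f N), (f (S N)), b.
  unfold Cmul, Cadd; simpl; f_equal; ring. Qed.


Lemma csum_ext (f g : nat -> Cplx) N : (forall k, (k <= N)%nat -> f k = g k) -> csum f N = csum g N.
Proof. induction N; intros H; simpl. apply H; lia. rewrite IHN, H; auto; intros; apply H; lia. Qed.

Lemma Csub_mul_r a b c : Cmul (Csub a b) c = Csub (Cmul a c) (Cmul b c).
Proof. destruct a, b, c; unfold Cmul, Csub; simpl; f_equal; ring. Qed.

Lemma KL (A B : R -> Cplx) (phi : nat -> R -> Cplx) K :
  ccont A -> ccont B -> (forall k, ccont (phi k)) -> (forall t, Cnorm (B t) <= K) ->
  (forall eps, 0 < eps -> exists N0, forall N, (N0 <= N)%nat -> forall t,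
     Cnorm (Csub (A t) (csum (fun k => phi k t) N)) <= eps) ->
  forall eps, 0 < eps -> exists N0, forall N, (N0 <= N)%nat ->
    Cnorm (Csub (CI (fun t => Cmul (A t) (B t)))
                (csum (fun k => CI (fun t => Cmul (phi k t) (B t))) N)) <= eps.
Proof.
  intros HA HB Hphi HK Hconv eps Heps.
  assert (K0 : 0 <= K) by (eapply Rle_trans; [apply Cnorm_ge0|apply (HK 0)]).
  pose proof PI_RGT_0 as HP.
  assert (Hd : 0 < eps / (4*PI*(K+1))).
  { apply Rdiv_lt_0_compat; auto. nra. }
  destruct (Hconv _ Hd) as [N0 HN0]. exists N0. intros N HN.
  assert (Hc : forall k, ccont (fun t => Cmul (phi k t) (B t))).
  { intros; apply ccont_mul; auto. }
  rewrite <- (CI_csum _ N Hc).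
  rewrite <- CI_sub; [| apply ccont_mul; auto | apply ccont_csum; auto].
  rewrite (CI_ext _ (fun t => Cmul (Csub (A t) (csum (fun k => phi k t) N)) (B t))).
  2:{ intros t. rewrite Csub_mul_r, csum_mul_r. auto. }
  eapply Rle_trans. apply CI_bound with (K := eps / (4*PI*(K+1)) * K).
  apply ccont_mul; auto. apply ccont_sub; auto. apply ccont_csum; auto.
  intros t. rewrite Cnorm_mul. apply Rmult_le_compat; try apply Cnorm_ge0; auto.
  replace (4 * PI * (eps / (4 * PI * (K + 1)) * K)) with (eps * (K / (K+1))) by (field; lra).
  assert (K / (K+1) <= 1). { apply Rmult_le_reg_r with (K+1). lra. field_simplify; lra. }
  nra.
Qed.

Lemma lim_const (L c : Cplx) (u : nat -> Cplx) :
  (forall eps, 0 < eps -> exists N0, forall N, (N0 <= N)%nat -> Cnorm (Csub L (u N)) <= eps) ->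
  (exists N1, forall N, (N1 <= N)%nat -> u N = c) -> L = c.
Proof.
  intros H [N1 HN1].
  assert (Hz : Cnorm (Csub L c) = 0).
  { apply Rle_antisym; [|apply Cnorm_ge0].
    apply Rnot_lt_le; intros Hlt. destruct (H _ (Rmult_lt_0_compat _ _ Hlt (Rinv_0_lt_compat 2 ltac:(lra)))) as [N0 HN0].
    specialize (HN0 (Nat.max N0 N1) ltac:(lia)). rewrite HN1 in HN0 by lia. lra. }
  apply Cnorm_zero in Hz. destruct L, c; unfold Csub in Hz; simpl in Hz; injection Hz; intros.
  f_equal; lra.
Qed.

Lemma E_mul a b : Cmul (E a) (E b) = E (a + b).
Proof. unfold E, Cmul; simpl. rewrite cos_plus, sin_plus. f_equal; ring. Qed.

Lemma sin_2pi_int (p : Z) : sin (IZR p * (2*PI)) = 0.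
Proof. apply sin_eq_0_1. exists (2*p)%Z. rewrite mult_IZR. simpl. ring. Qed.
Lemma cos_2pi_int (p : Z) : cos (IZR p * (2*PI)) = 1.
Proof. replace (IZR p * (2*PI)) with (2 * (IZR p * PI)) by ring.
  rewrite cos_2a_sin. rewrite sin_eq_0_1. ring. exists p; auto. Qed.

Lemma rint_cos (a : R) : a <> 0 -> (forall p, a = IZR p -> True) -> True.
Proof. auto. Qed.

Lemma RInt_cos_int (p : Z) : p <> 0%Z ->
  RInt.RInt (fun t => cos (IZR p * t)) 0 (2*PI) = 0.
Proof. intros Hp. assert (Hp' : IZR p <> 0) by (apply not_0_IZR; auto).
  assert (H := is_RInt_derive (fun t => sin (IZR p * t) / IZR p) (fun t => cos (IZR p * t)) 0 (2*PI)).
  assert (H1 : forall x : R, Rmin 0 (2 * PI) <= x <= Rmax 0 (2 * PI) ->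
   is_derive (fun t : R => sin (IZR p * t) / IZR p) x (cos (IZR p * x))).
  { intros x _. auto_derive. auto. field. auto. }
  assert (H2 : forall x : R, Rmin 0 (2 * PI) <= x <= Rmax 0 (2 * PI) ->
   continuous (fun t : R => cos (IZR p * t)) x).
  { intros x _. apply continuous_cos_comp. apply rcont_mult; [apply rcont_const|apply rcont_id]. }
  rewrite (is_RInt_unique _ _ _ _ (H H1 H2)).
  cbv beta. rewrite sin_2pi_int, Rmult_0_r, sin_0. unfold minus, plus, opp; simpl. field. auto.
Qed.
Lemma RInt_sin_int (p : Z) : p <> 0%Z ->
  RInt.RInt (fun t => sin (IZR p * t)) 0 (2*PI) = 0.
Proof. intros Hp. assert (Hp' : IZR p <> 0) by (apply not_0_IZR; auto).
  assert (H := is_RInt_derive (fun t => - cos (IZR p * t) / IZR p) (fun t => sin (IZR p * t)) 0 (2*PI)).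
  assert (H1 : forall x : R, Rmin 0 (2 * PI) <= x <= Rmax 0 (2 * PI) ->
   is_derive (fun t : R => - cos (IZR p * t) / IZR p) x (sin (IZR p * x))).
  { intros x _. auto_derive. auto. field. auto. }
  assert (H2 : forall x : R, Rmin 0 (2 * PI) <= x <= Rmax 0 (2 * PI) ->
   continuous (fun t : R => sin (IZR p * t)) x).
  { intros x _. apply (continuous_comp (fun s => IZR p * s) sin).
    apply rcont_mult; [apply rcont_const|apply rcont_id]. apply continuous_sin. }
  rewrite (is_RInt_unique _ _ _ _ (H H1 H2)).
  cbv beta. rewrite cos_2pi_int, Rmult_0_r, cos_0. unfold minus, plus, opp; simpl. field. auto.
Qed.

Lemma CI_E (p : Z) : CI (fun t => E (IZR p * t)) = if Z.eqb p 0 then RtoC (2*PI) else (0,0).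
Proof. destruct (Z.eqb_spec p 0).
  - subst. unfold CI, E, RtoC; simpl. f_equal.
    rewrite (rint_ext _ (fun _ => 1)). rewrite RInt_const. unfold scal; simpl; unfold mult; simpl; ring.
    intros; rewrite Rmult_0_l, cos_0; auto.
    rewrite (rint_ext _ (fun _ => 0)). rewrite RInt_const. unfold scal; simpl; unfold mult; simpl; ring.
    intros; rewrite Rmult_0_l, sin_0; auto.
  - unfold CI, E; simpl. rewrite RInt_cos_int, RInt_sin_int; auto.
Qed.

Ltac cring := unfold Cmul, Cadd, Csub, RtoC, E; simpl; f_equal; ring.

Lemma Cmul_assoc a b c : Cmul (Cmul a b) c = Cmul a (Cmul b c).
Proof. cring. Qed.
Lemma Cmul_comm a b : Cmul a b = Cmul b a.
Proof. cring. Qed.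
Lemma Cmul_Cadd_r a b c : Cmul a (Cadd b c) = Cadd (Cmul a b) (Cmul a c).
Proof. cring. Qed.
Lemma Cmul_Csub_r a b c : Cmul a (Csub b c) = Csub (Cmul a b) (Cmul a c).
Proof. cring. Qed.
Lemma Cmul_1_l a : Cmul (1,0) a = a.
Proof. destruct a; cring. Qed.
Lemma Cmul_1_r a : Cmul a (1,0) = a.
Proof. destruct a; cring. Qed.
Lemma Cinv_l x : x <> (0,0) -> Cmul (Defs.Cinv x) x = (1,0).
Proof. intros H. destruct x as [a b]. unfold Defs.Cinv, Cmul; simpl.
  assert (a*a+b*b <> 0). { intro Hz. apply H. assert (a = 0) by nra. assert (b=0) by nra. subst; auto. }
  f_equal; field; auto. Qed.
Lemma RtoC_mul a b : Cmul (RtoC a) (RtoC b) = RtoC (a*b).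
Proof. cring. Qed.

Definition gam (r t : R) : Cplx := Cmul (RtoC r) (E t).
Definition geo_term (r l : R) (k : nat) (t : R) : Cplx :=
  Cmul (RtoC (l^k * (/r)^(k+1))) (E (-(INR k + 1) * t)).

Lemma Cnorm_gam r t : 0 <= r -> Cnorm (gam r t) = r.
Proof. intros. unfold gam. rewrite Cnorm_mul, Cnorm_E, Cnorm_RtoC, Rabs_right; lra. Qed.

Lemma geo_id r l t N : r <> 0 ->
  Cmul (Csub (gam r t) (RtoC l)) (csum (fun k => geo_term r l k t) N) =
  Csub (1,0) (Cmul (RtoC (l^(N+1) * (/r)^(N+1))) (E (-(INR N + 1) * t))).
Proof.
  intros Hr. induction N.
  - simpl. unfold geo_term, gam. simpl.
    assert (HE : Cmul (E t) (E (-(0+1)*t)) = (1,0)).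
    { rewrite E_mul. replace (t + - (0+1)*t) with 0 by ring. unfold E; rewrite cos_0, sin_0; auto. }
    transitivity (Csub (Cmul (RtoC (r * (1 * (/r * 1)))) (Cmul (E t) (E (-(0+1)*t))))
                       (Cmul (RtoC (l * (1 * (/ r * 1)))) (E (-(0+1)*t)))).
    cring. rewrite HE. replace (r * (1 * (/ r * 1))) with 1 by (field; auto).
    cring.
  - simpl csum. rewrite Cmul_Cadd_r, IHN. unfold geo_term, gam.
    assert (HE : Cmul (E t) (E (-(INR (S N)+1)*t)) = E (-(INR N+1)*t)).
    { rewrite E_mul. f_equal. rewrite S_INR. ring. }
    set (c := l ^ S N * (/ r) ^ (S N + 1)).
    transitivity (Cadd (Csub (1,0) (Cmul (RtoC (l ^ (N + 1) * (/ r) ^ (N + 1))) (E (- (INR N + 1) * t))))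
        (Csub (Cmul (RtoC (r*c)) (Cmul (E t) (E (-(INR (S N)+1)*t)))) (Cmul (RtoC (l*c)) (E (-(INR (S N)+1)*t))))).
    cring. rewrite HE.
    replace (r * c) with (l ^ (N + 1) * (/ r) ^ (N + 1)).
    replace (l * c) with (l ^ (S N + 1) * (/ r) ^ (S N + 1)).
    cring.
    unfold c. replace (S N + 1)%nat with (S (S N)) by lia. replace (N+1)%nat with (S N) by lia. simpl. ring.
    unfold c. replace (S N + 1)%nat with (S (S N)) by lia. replace (N+1)%nat with (S N) by lia. simpl. field. auto.
Qed.

Lemma gam_sub_norm r l t : 0 <= l -> l + 1 <= r -> 1 <= Cnorm (Csub (gam r t) (RtoC l)).
Proof. intros Hl Hr.
  assert (H : gam r t = Cadd (Csub (gam r t) (RtoC l)) (RtoC l)) by (unfold gam; cring).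
  pose proof (Cnorm_add (Csub (gam r t) (RtoC l)) (RtoC l)). rewrite <- H in H0.
  rewrite Cnorm_gam, Cnorm_RtoC, Rabs_right in H0; lra. Qed.
Lemma nz_of_norm x : 0 < Cnorm x -> x <> (0,0).
Proof. intros H Hx; subst. unfold Cnorm in H; simpl in H.
  replace (0*0+0*0) with 0 in H by ring. rewrite sqrt_0 in H. lra. Qed.

Lemma geo_approx r l t N : 0 <= l -> l + 1 <= r ->
  Cnorm (Csub (Defs.Cinv (Csub (gam r t) (RtoC l))) (csum (fun k => geo_term r l k t) N)) <= (l/r)^(N+1).
Proof.
  intros Hl Hr. set (x := Csub (gam r t) (RtoC l)). set (S := csum (fun k => geo_term r l k t) N).
  assert (Hx : 1 <= Cnorm x) by (apply gam_sub_norm; auto).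
  assert (Hx0 : x <> (0,0)) by (apply nz_of_norm; lra).
  assert (HD : Csub (Defs.Cinv x) S = Cmul (Defs.Cinv x) (Csub (1,0) (Cmul x S))).
  { rewrite Cmul_Csub_r, <- Cmul_assoc, Cinv_l, Cmul_1_l, Cmul_1_r; auto. }
  rewrite HD. unfold x, S. rewrite geo_id by lra. fold x.
  replace (Csub (1, 0) (Csub (1, 0) (Cmul (RtoC (l ^ (N + 1) * (/ r) ^ (N + 1))) (E (- (INR N + 1) * t)))))
    with (Cmul (RtoC (l ^ (N + 1) * (/ r) ^ (N + 1))) (E (- (INR N + 1) * t))) by cring.
  rewrite !Cnorm_mul, Cnorm_inv, Cnorm_RtoC, Cnorm_E by auto.
  rewrite <- Rpow_mult_distr. unfold Rdiv.
  assert (0 <= l * / r) by (apply Rmult_le_pos; auto; left; apply Rinv_0_lt_compat; lra).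
  rewrite Rabs_right by (apply Rle_ge, pow_le; auto).
  assert (0 < / Cnorm x <= 1).
  { split. apply Rinv_0_lt_compat; lra. rewrite <- Rinv_1. apply Rinv_le_contravar; lra. }
  pose proof (pow_le _ (N+1) H). nra.
Qed.

Lemma ccont_ext F G : (forall t, F t = G t) -> ccont F -> ccont G.
Proof. intros H HF t. destruct (HF t). split.
  apply (continuous_ext (fun s => fst (F s))); auto. intros; rewrite H; auto.
  apply (continuous_ext (fun s => snd (F s))); auto. intros; rewrite H; auto. Qed.
Lemma ccont_gam r : ccont (gam r).
Proof. unfold gam. apply ccont_mul. apply ccont_const.
  apply (ccont_ext (fun t => E (1*t))). intros; rewrite Rmult_1_l; auto. apply ccont_E. Qed.

Fixpoint prodl (lam : nat -> R) (m : nat) (w : Cplx) : Cplx :=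
  match m with O => (1,0) | S k => Cmul (prodl lam k w) (Csub w (RtoC (lam k))) end.

Lemma prod_lin_prodl lam n w : prod_lin (fun j => RtoC (lam j)) n w = prodl lam (S n) w.
Proof. induction n. simpl. rewrite Cmul_1_l; auto. simpl. rewrite IHn. auto. Qed.

Definition Hyp (lam : nat -> R) (r : R) (m : nat) := forall j, (j < m)%nat -> 0 <= lam j /\ lam j + 1 <= r.

Lemma prodl_norm lam r m t : Hyp lam r m -> 1 <= Cnorm (prodl lam m (gam r t)).
Proof. induction m; intros H; simpl.
  - unfold Cnorm; simpl. replace (1*1+0*0) with 1 by ring. rewrite sqrt_1; lra.
  - rewrite Cnorm_mul. assert (1 <= Cnorm (prodl lam m (gam r t))) by (apply IHm; intros j Hj; apply H; lia).
    assert (1 <= Cnorm (Csub (gam r t) (RtoC (lam m)))) by (apply gam_sub_norm; apply H; lia).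
    nra. Qed.

Lemma ccont_prodl lam r m : ccont (fun t => prodl lam m (gam r t)).
Proof. induction m; simpl. apply ccont_const. apply ccont_mul; auto.
  apply ccont_sub. apply ccont_gam. apply ccont_const. Qed.

Definition Dinv lam r m t := Defs.Cinv (prodl lam m (gam r t)).

Lemma ccont_Dinv lam r m : Hyp lam r m -> ccont (Dinv lam r m).
Proof. intros H. unfold Dinv. apply ccont_inv. apply ccont_prodl.
  intros t; apply nz_of_norm. pose proof (prodl_norm lam r m t H); lra. Qed.
Lemma Dinv_norm lam r m t : Hyp lam r m -> Cnorm (Dinv lam r m t) <= 1.
Proof. intros H. unfold Dinv. pose proof (prodl_norm lam r m t H).
  rewrite Cnorm_inv by (apply nz_of_norm; lra). rewrite <- Rinv_1. apply Rinv_le_contravar; lra. Qed.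

Lemma Cinv_mul a b : a <> (0,0) -> b <> (0,0) -> Defs.Cinv (Cmul a b) = Cmul (Defs.Cinv a) (Defs.Cinv b).
Proof. intros Ha Hb. destruct a as [a1 a2], b as [b1 b2].
  assert (a1*a1+a2*a2 <> 0). { intro Hz. apply Ha. assert (a1 = 0) by nra. assert (a2=0) by nra. subst; auto. }
  assert (b1*b1+b2*b2 <> 0). { intro Hz. apply Hb. assert (b1 = 0) by nra. assert (b2=0) by nra. subst; auto. }
  unfold Defs.Cinv, Cmul; simpl. assert (HP : (a1 * b1 - a2 * b2) * (a1 * b1 - a2 * b2) + (a1 * b2 + a2 * b1) * (a1 * b2 + a2 * b1) <> 0).
  { replace ((a1 * b1 - a2 * b2) * (a1 * b1 - a2 * b2) + (a1 * b2 + a2 * b1) * (a1 * b2 + a2 * b1))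
     with ((a1*a1+a2*a2)*(b1*b1+b2*b2)) by ring. apply Rmult_integral_contrapositive; auto. }
  f_equal; field; auto. Qed.

Fixpoint Gs (lam : nat -> R) (m q : nat) : R :=
  match m with
  | O => if Nat.eqb q 0 then 1 else 0
  | S k => sum_f_R0 (fun i => lam k ^ i * Gs lam k (q - i)) q
  end.

Definition rval lam r m (p : Z) : R :=
  if (p <? Z.of_nat m)%Z then 0
  else 2*PI * Gs lam m (Z.to_nat (p - Z.of_nat m)) * (/r)^(Z.to_nat p).

Lemma csum_RtoC (f : nat -> R) N : csum (fun k => RtoC (f k)) N = RtoC (sum_f_R0 f N).
Proof. induction N; simpl; auto. rewrite IHN. cring. Qed.

Lemma sum_ext_zero (f : nat -> R) Q N : (forall k, (Q < k)%nat -> f k = 0) -> (Q <= N)%nat ->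
  sum_f_R0 f N = sum_f_R0 f Q.
Proof. intros H. induction N; intros HN.
  - replace Q with 0%nat by lia. auto.
  - destruct (Nat.eq_dec Q (S N)). subst; auto.
    simpl. rewrite IHN by lia. rewrite H by lia. ring. Qed.

Lemma rval_step lam r m p N : 0 < r ->
  (Z.to_nat (p - Z.of_nat m - 1) <= N)%nat ->
  sum_f_R0 (fun k => lam m ^ k * (/r)^(k+1) * rval lam r m (p - Z.of_nat k - 1)) N = rval lam r (S m) p.
Proof.
  intros Hr HN. unfold rval at 2. destruct (Z.ltb_spec p (Z.of_nat (S m))).
  - rewrite (sum_eq _ (fun _ => 0)). rewrite sum_cte; ring.
    intros k _. unfold rval. destruct (Z.ltb_spec (p - Z.of_nat k - 1) (Z.of_nat m)). ring. lia.
  - set (Q := Z.to_nat (p - Z.of_nat (S m))).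
    assert (HQ : Z.to_nat (p - Z.of_nat m - 1) = Q) by (unfold Q; lia).
    rewrite HQ in HN.
    rewrite (sum_ext_zero _ Q N); auto.
    2:{ intros k Hk. unfold rval. destruct (Z.ltb_spec (p - Z.of_nat k - 1) (Z.of_nat m)). ring. lia. }
    simpl Gs. match goal with |- _ = 2*PI * ?X * ?Y => replace (2*PI*X*Y) with ((2*PI*Y)*X) by ring end.
    rewrite scal_sum.
    apply sum_eq. intros k Hk. unfold rval.
    destruct (Z.ltb_spec (p - Z.of_nat k - 1) (Z.of_nat m)). lia.
    replace (Z.to_nat (p - Z.of_nat k - 1 - Z.of_nat m)) with (Q - k)%nat by (unfold Q; lia).
    replace (Z.to_nat p) with ((k+1) + Z.to_nat (p - Z.of_nat k - 1))%nat by lia.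
    rewrite !pow_add. ring.
Qed.

Lemma Dinv_step lam r m t : Hyp lam r (S m) ->
  Dinv lam r (S m) t = Cmul (Dinv lam r m t) (Defs.Cinv (Csub (gam r t) (RtoC (lam m)))).
Proof. intros H. unfold Dinv; simpl. apply Cinv_mul.
  apply nz_of_norm. pose proof (prodl_norm lam r m t ltac:(intros j Hj; apply H; lia)). lra.
  apply nz_of_norm. pose proof (gam_sub_norm r (lam m) t ltac:(apply H; lia) ltac:(apply H; lia)). lra. Qed.

Lemma geo_unif r l : 0 <= l -> l + 1 <= r ->
  forall eps, 0 < eps -> exists N0, forall N, (N0 <= N)%nat -> forall t,
   Cnorm (Csub (Defs.Cinv (Csub (gam r t) (RtoC l))) (csum (fun k => geo_term r l k t) N)) <= eps.
Proof. intros Hl Hr eps He.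
  assert (Hq : Rabs (l/r) < 1).
  { rewrite Rabs_right. apply Rmult_lt_reg_r with r. lra. unfold Rdiv; rewrite Rmult_assoc, Rinv_l; lra.
    apply Rle_ge, Rmult_le_pos; auto. left; apply Rinv_0_lt_compat; lra. }
  destruct (pow_lt_1_zero _ Hq eps He) as [N0 HN0]. exists N0. intros N HN t.
  eapply Rle_trans. apply geo_approx; auto.
  specialize (HN0 (N+1)%nat ltac:(lia)). eapply Rle_trans. apply Rle_abs. lra. Qed.

Lemma ccont_geo r l k : ccont (geo_term r l k).
Proof. unfold geo_term. intros t. apply (ccont_mul (fun _ => RtoC _) (fun t => E _)). apply ccont_const. apply ccont_E. Qed.

Lemma Dcoef lam r m : 0 < r -> Hyp lam r m -> forall p : Z,
  CI (fun t => Cmul (E (IZR p * t)) (Dinv lam r m t)) = RtoC (rval lam r m p).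
Proof.
  intros Hr. induction m; intros Hy p.
  - rewrite (CI_ext _ (fun t => E (IZR p * t))).
    rewrite CI_E. unfold rval. destruct (Z.eqb_spec p 0).
    + subst. simpl. f_equal. ring.
    + destruct (Z.ltb_spec p (Z.of_nat 0)). unfold RtoC; auto.
      simpl Gs. match goal with |- context [Nat.eqb ?a 0] => destruct (Nat.eqb_spec a 0) end.
      lia. unfold RtoC; f_equal; ring.
    + intros t. unfold Dinv. simpl. unfold Defs.Cinv; simpl.
      replace (1/(1*1+0*0)) with 1 by field. replace (-0/(1*1+0*0)) with 0 by field.
      destruct (E (IZR p * t)); unfold Cmul; simpl; f_equal; ring.
  - assert (Hy' : Hyp lam r m) by (intros j Hj; apply Hy; lia).
    assert (Hl : 0 <= lam m /\ lam m + 1 <= r) by (apply Hy; lia).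
    set (A := fun t => Defs.Cinv (Csub (gam r t) (RtoC (lam m)))).
    set (B := fun t => Cmul (E (IZR p * t)) (Dinv lam r m t)).
    rewrite (CI_ext _ (fun t => Cmul (A t) (B t))).
    2:{ intros t. rewrite Dinv_step by auto. unfold A, B. cring. }
    assert (HA : ccont A).
    { unfold A. apply ccont_inv. apply ccont_sub. apply ccont_gam. apply ccont_const.
      intros t; apply nz_of_norm. pose proof (gam_sub_norm r (lam m) t ltac:(lra) ltac:(lra)). lra. }
    assert (HB : ccont B) by (apply ccont_mul; [apply (ccont_E (IZR p))| apply ccont_Dinv; auto]).
    assert (HBn : forall t, Cnorm (B t) <= 1).
    { intros t; unfold B. rewrite Cnorm_mul, Cnorm_E. pose proof (Dinv_norm lam r m t Hy'). lra. }
    pose proof (KL A B (geo_term r (lam m)) 1 HA HB (ccont_geo r (lam m)) HBn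
                  (geo_unif r (lam m) ltac:(lra) ltac:(lra))) as HK.
    apply (lim_const _ _ _ HK).
    exists (Z.to_nat (p - Z.of_nat m - 1)). intros N HN.
    rewrite (csum_ext _ (fun k => RtoC (lam m ^ k * (/r)^(k+1) * rval lam r m (p - Z.of_nat k - 1)))).
    rewrite csum_RtoC, rval_step; auto.
    intros k _. rewrite <- RtoC_mul, <- IHm by auto. rewrite <- CI_cmul.
    2:{ apply ccont_mul. apply ccont_E. apply ccont_Dinv; auto. }
    apply CI_ext. intros t. unfold B, geo_term.
    transitivity (Cmul (RtoC (lam m ^ k * (/ r) ^ (k + 1))) (Cmul (Cmul (E (- (INR k + 1) * t)) (E (IZR p * t))) (Dinv lam r m t))).
    cring. rewrite E_mul. f_equal. f_equal. f_equal.
    rewrite !minus_IZR, <- INR_IZR_INZ. ring.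
Qed.

Lemma rder_mult (f g : R -> R) (x df dg : R) : is_derive f x df -> is_derive g x dg ->
  is_derive (fun t => f t * g t) x (df * g x + f x * dg).
Proof. intros H1 H2. apply is_derive_Reals. apply is_derive_Reals in H1, H2.
  exact (derivable_pt_lim_mult f g x df dg H1 H2). Qed.
Lemma rder_plus (f g : R -> R) (x df dg : R) : is_derive f x df -> is_derive g x dg ->
  is_derive (fun t => f t + g t) x (df + dg).
Proof. intros H1 H2. apply is_derive_Reals. apply is_derive_Reals in H1, H2.
  exact (derivable_pt_lim_plus f g x df dg H1 H2). Qed.
Lemma rder_minus (f g : R -> R) (x df dg : R) : is_derive f x df -> is_derive g x dg ->
  is_derive (fun t => f t - g t) x (df - dg).
Proof. intros H1 H2. apply is_derive_Reals. apply is_derive_Reals in H1, H2.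
  exact (derivable_pt_lim_minus f g x df dg H1 H2). Qed.
Lemma rder_const (c x : R) : is_derive (fun _ => c) x 0.
Proof. apply is_derive_Reals. apply (derivable_pt_lim_const c x). Qed.
Lemma rder_ext (f g : R -> R) (x d d' : R) : (forall t, f t = g t) -> is_derive f x d -> d = d' -> is_derive g x d'.
Proof. intros H Hd He; subst. apply (is_derive_ext f g); auto. Qed.

Definition cderiv (F F' : R -> Cplx) :=
  forall s, is_derive (fun s => fst (F s)) s (fst (F' s)) /\ is_derive (fun s => snd (F s)) s (snd (F' s)).

Lemma cderiv_add F F' G G' : cderiv F F' -> cderiv G G' ->
  cderiv (fun s => Cadd (F s) (G s)) (fun s => Cadd (F' s) (G' s)).
Proof. intros HF HG s; destruct (HF s), (HG s); simpl; split; apply rder_plus; auto. Qed.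
Lemma cderiv_mul F F' G G' : cderiv F F' -> cderiv G G' ->
  cderiv (fun s => Cmul (F s) (G s)) (fun s => Cadd (Cmul (F' s) (G s)) (Cmul (F s) (G' s))).
Proof. intros HF HG s; destruct (HF s), (HG s); simpl; split.
  - eapply rder_ext. intros; reflexivity. apply rder_minus; apply rder_mult; eauto. cbv beta; ring.
  - eapply rder_ext. intros; reflexivity. apply rder_plus; apply rder_mult; eauto. cbv beta; ring. Qed.
Lemma cderiv_const c : cderiv (fun _ => c) (fun _ => (0,0)).
Proof. intros s; split; apply rder_const. Qed.
Lemma cderiv_realscal f f' c : (forall s, is_derive f s (f' s)) ->
  cderiv (fun s => Cmul (RtoC (f s)) c) (fun s => Cmul (RtoC (f' s)) c).
Proof. intros Hf s. unfold Cmul, RtoC; simpl; split.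
  - eapply rder_ext. intros; reflexivity. apply rder_minus; apply rder_mult; [apply Hf|apply rder_const|apply rder_const|apply rder_const]. cbv beta; ring.
  - eapply rder_ext. intros; reflexivity. apply rder_plus; apply rder_mult; [apply Hf|apply rder_const|apply rder_const|apply rder_const]. cbv beta; ring. Qed.
Lemma cderiv_ext F G F' G' : (forall s, F s = G s) -> (forall s, F' s = G' s) -> cderiv F F' -> cderiv G G'.
Proof. intros H1 H2 HF s; destruct (HF s); split.
  eapply (rder_ext (fun s => fst (F s))). intros; rewrite H1; reflexivity. eauto. rewrite H2; reflexivity.
  eapply (rder_ext (fun s => snd (F s))). intros; rewrite H1; reflexivity. eauto. rewrite H2; reflexivity. Qed.

Fixpoint Cpow (u : Cplx) (k : nat) : Cplx := match k with O => (1,0) | S j => Cmul u (Cpow u j) end.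
Definition Sexp u N := csum (fun k => Cmul (RtoC (/ INR (Factorial.fact k))) (Cpow u k)) N.
Definition Qs u N s := csum (fun k => Cmul (RtoC (s^k / INR (Factorial.fact k))) (Cpow u k)) N.
Definition Qd u N s := match N with O => (0,0) | S M => Cmul u (Qs u M s) end.

Lemma der_powfact k s : is_derive (fun s => s^(S k) / INR (Factorial.fact (S k))) s (s^k / INR (Factorial.fact k)).
Proof. pose proof (INR_fact_lt_0 k).
  assert (Hp : is_derive (fun s => s^(S k)) s (INR (S k) * 1 * s^(pred (S k)))).
  { apply (is_derive_pow (fun s => s)). apply (is_derive_id s). }
  eapply rder_ext. intros; reflexivity. apply rder_mult. apply Hp. apply rder_const.
  cbv beta. simpl pred. rewrite fact_simpl, mult_INR. field. split. lra.
  rewrite S_INR. pose proof (pos_INR k). lra. Qed.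
Lemma der_pow0 s : is_derive (fun s => s^0 / INR (Factorial.fact 0)) s 0.
Proof. eapply rder_ext. intros t. simpl. reflexivity. apply rder_const. auto. Qed.

Lemma Qs_deriv u N : cderiv (Qs u N) (Qd u N).
Proof. induction N.
  - eapply cderiv_ext. 3: apply (cderiv_realscal (fun s => s^0 / INR (Factorial.fact 0)) (fun _ => 0) (Cpow u 0)).
    intros s; unfold Qs; simpl; reflexivity.
    intros s. simpl. cring. intros s. apply der_pow0.
  - eapply cderiv_ext. 3: apply cderiv_add. 3: apply IHN.
    3: apply (cderiv_realscal (fun s => s^(S N) / INR (Factorial.fact (S N))) (fun s => s^N / INR (Factorial.fact N)) (Cpow u (S N))).
    intros s; unfold Qs; simpl; reflexivity.
    2: intros s; apply der_powfact.
    intros s. destruct N.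
    + unfold Qd, Qs; simpl. cring.
    + unfold Qd. unfold Qs at 2. simpl csum. fold (Qs u N s). cring.
Qed.

Definition Pf (u : Cplx) (s : R) : Cplx :=
  (exp (-(s*fst u)) * cos (-(s*snd u)), exp (-(s*fst u)) * sin (-(s*snd u))).

Lemma Pf_deriv u : cderiv (Pf u) (fun s => Cmul (RtoC (-1)) (Cmul u (Pf u s))).
Proof. intros s; unfold Pf; simpl; split.
  - auto_derive. auto. unfold Cmul, RtoC; simpl. ring.
  - auto_derive. auto. unfold Cmul, RtoC; simpl. ring. Qed.

Definition phi u N s := Cmul (Pf u s) (Qs u N s).
Definition dphi u N s := Cmul (RtoC (-1)) (Cmul u (Cmul (Pf u s) (Cmul (RtoC (s^N / INR (Factorial.fact N))) (Cpow u N)))).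

Lemma phi_deriv u N : cderiv (phi u N) (dphi u N).
Proof. eapply cderiv_ext. 3: apply cderiv_mul; [apply Pf_deriv | apply Qs_deriv].
  intros; reflexivity.
  intros s. unfold dphi. destruct N.
  + unfold Qd, Qs; simpl. cring.
  + unfold Qd. unfold Qs at 1. simpl csum. fold (Qs u N s). cring.
Qed.

Lemma Cnorm_Cpow u k : Cnorm (Cpow u k) = Cnorm u ^ k.
Proof. induction k; simpl. unfold Cnorm; simpl. replace (1*1+0*0) with 1 by ring. apply sqrt_1.
  rewrite Cnorm_mul, IHk. auto. Qed.
Lemma Cnorm_Pf u s : Cnorm (Pf u s) = exp (-(s*fst u)).
Proof. unfold Cnorm, Pf; simpl.
  replace (exp (- (s * fst u)) * cos (- (s * snd u)) * (exp (- (s * fst u)) * cos (- (s * snd u))) +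
   exp (- (s * fst u)) * sin (- (s * snd u)) * (exp (- (s * fst u)) * sin (- (s * snd u))))
  with (Rsqr (exp (- (s * fst u)))).
  rewrite sqrt_Rsqr; auto. left; apply exp_pos.
  pose proof (sin2_cos2 (- (s * snd u))). unfold Rsqr in *. nra. Qed.
Lemma exp_le x y : x <= y -> exp x <= exp y.
Proof. intros [H|H]. left; apply exp_increasing; auto. subst; lra. Qed.

Lemma dphi_bound u N s : 0 <= s <= 1 ->
  Cnorm (dphi u N s) <= exp (Cnorm u) * Cnorm u ^ (S N) / INR (Factorial.fact N).
Proof. intros Hs. unfold dphi. rewrite !Cnorm_mul, Cnorm_Pf, Cnorm_Cpow, !Cnorm_RtoC.
  pose proof (INR_fact_lt_0 N). pose proof (Cnorm_ge0 u).
  assert (Ha : exp (-(s * fst u)) <= exp (Cnorm u)).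
  { apply exp_le. pose proof (Rabs_fst_le u). pose proof (Rabs_maj2 (fst u)). pose proof (Rabs_pos (fst u)).
    assert (s * (- fst u) <= s * Rabs (fst u)) by (apply Rmult_le_compat_l; lra).
    assert (s * Rabs (fst u) <= Rabs (fst u)).
    { rewrite <- (Rmult_1_l (Rabs (fst u))) at 2. apply Rmult_le_compat_r; lra. }
    lra. }
  assert (Hp : 0 <= s^N <= 1). { split. apply pow_le; lra. rewrite <- (pow1 N). apply pow_incr; lra. }
  replace (Rabs (-1)) with 1 by (unfold Rabs; destruct Rcase_abs; lra).
  rewrite (Rabs_right (s ^ N / INR (Factorial.fact N))) by (apply Rle_ge, Rmult_le_pos; [lra| left; apply Rinv_0_lt_compat; lra]).
  simpl pow. unfold Rdiv.
  assert (0 <= Cnorm u ^ N) by (apply pow_le; auto).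
  assert (0 < / INR (Factorial.fact N)) by (apply Rinv_0_lt_compat; lra).
  pose proof (exp_pos (-(s * fst u))).
  assert (s ^ N * / INR (Factorial.fact N) <= / INR (Factorial.fact N)) by nra.
  assert (0 <= s ^ N * / INR (Factorial.fact N)) by nra.
  apply Rle_trans with (1 * (Cnorm u * (exp (Cnorm u) * (/ INR (Factorial.fact N) * Cnorm u ^ N)))).
  apply Rmult_le_compat_l; try lra. apply Rmult_le_compat_l; auto.
  apply Rmult_le_compat; try lra. apply Rmult_le_pos; lra. apply Rmult_le_compat_r; lra.
  right; ring.
Qed.

Lemma comp_mvt (f f' : R -> R) K : (forall s, is_derive f s (f' s)) ->
  (forall s, 0 <= s <= 1 -> Rabs (f' s) <= K) -> Rabs (f 1 - f 0) <= K.
Proof. intros Hd Hb. destruct (MVT_abs f f' 0 1) as [c [Hc Hc2]].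
  intros c _. apply is_derive_Reals; auto.
  rewrite Hc. rewrite Rmin_left, Rmax_right in Hc2 by lra.
  replace (Rabs (1 - 0)) with 1 by (rewrite Rminus_0_r, Rabs_R1; auto). rewrite Rmult_1_r. apply Hb; lra. Qed.

Lemma phi0 u N : phi u N 0 = (1,0).
Proof. unfold phi. assert (HQ : Qs u N 0 = (1,0)).
  { induction N. unfold Qs; simpl. unfold Cmul, RtoC; simpl; f_equal; field. unfold Qs; simpl csum. fold (Qs u N 0). rewrite IHN.
    replace (0 ^ S N / INR (Factorial.fact (S N))) with 0 by (unfold Rdiv; rewrite pow_i by lia; ring). unfold Cadd, Cmul, RtoC; simpl; f_equal; unfold Rdiv; ring. }
  rewrite HQ. unfold Pf. rewrite !Rmult_0_l, Ropp_0, exp_0, cos_0, sin_0. cring. Qed.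

Lemma phi1 u N : Cmul (Cexp u) (phi u N 1) = Sexp u N.
Proof. unfold phi. assert (HQ : Qs u N 1 = Sexp u N).
  { unfold Qs, Sexp. apply csum_ext. intros k _. rewrite pow1. unfold Rdiv. rewrite Rmult_1_l. auto. }
  rewrite HQ. rewrite <- Cmul_assoc.
  assert (HP : Cmul (Cexp u) (Pf u 1) = (1,0)).
  { unfold Cexp, Pf, Cmul; simpl. rewrite !Rmult_1_l, cos_neg, sin_neg.
    replace (exp (fst u) * cos (snd u) * (exp (- fst u) * cos (snd u)) -
      exp (fst u) * sin (snd u) * (exp (- fst u) * - sin (snd u))) with
      (exp (fst u) * exp (- fst u) * (Rsqr (sin (snd u)) + Rsqr (cos (snd u)))) by (unfold Rsqr; ring).
    rewrite sin2_cos2, <- exp_plus, Rplus_opp_r, exp_0. f_equal. ring. ring. }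
  rewrite HP, Cmul_1_l. auto. Qed.

Lemma Cnorm_Cexp u : Cnorm (Cexp u) = exp (fst u).
Proof. unfold Cexp, Cnorm; simpl.
  replace (exp (fst u) * cos (snd u) * (exp (fst u) * cos (snd u)) +
    exp (fst u) * sin (snd u) * (exp (fst u) * sin (snd u))) with (Rsqr (exp (fst u)))
   by (pose proof (sin2_cos2 (snd u)); unfold Rsqr in *; nra).
  apply sqrt_Rsqr. left; apply exp_pos. Qed.

Lemma exp_approx u N : Cnorm (Csub (Cexp u) (Sexp u N)) <=
  exp (Cnorm u) * (2 * (exp (Cnorm u) * Cnorm u ^ (S N) / INR (Factorial.fact N))).
Proof.
  set (K := exp (Cnorm u) * Cnorm u ^ (S N) / INR (Factorial.fact N)).
  assert (H1 : Rabs (fst (phi u N 1) - fst (phi u N 0)) <= K).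
  { apply (comp_mvt (fun s => fst (phi u N s)) (fun s => fst (dphi u N s))).
    intros s; apply phi_deriv. intros s Hs. eapply Rle_trans. apply Rabs_fst_le. apply dphi_bound; auto. }
  assert (H2 : Rabs (snd (phi u N 1) - snd (phi u N 0)) <= K).
  { apply (comp_mvt (fun s => snd (phi u N s)) (fun s => snd (dphi u N s))).
    intros s; apply phi_deriv. intros s Hs. eapply Rle_trans. apply Rabs_snd_le. apply dphi_bound; auto. }
  assert (Hd : Cnorm (Csub (phi u N 1) (phi u N 0)) <= 2 * K).
  { eapply Rle_trans. apply Cnorm_le_sum. unfold Csub; cbn [fst snd]. lra. }
  rewrite Cnorm_sub_sym. rewrite <- phi1.
  replace (Csub (Cmul (Cexp u) (phi u N 1)) (Cexp u)) with (Cmul (Cexp u) (Csub (phi u N 1) (phi u N 0))).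
  2:{ rewrite phi0. cring. }
  rewrite Cnorm_mul. apply Rmult_le_compat; auto using Cnorm_ge0.
  rewrite Cnorm_Cexp. apply exp_le.
  pose proof (Rabs_fst_le u). pose proof (Rle_abs (fst u)). lra.
Qed.

Lemma RInt_eq (f : R -> R) : (forall t, continuous f t) -> Defs.RInt f 0 (2*PI) = RInt.RInt f 0 (2*PI).
Proof. intros Hc. unfold Defs.RInt. destruct excluded_middle_informative as [h|h].
  - rewrite (RInt_Reals f 0 (2*PI) (epsilon h (fun _ => True))). auto.
  - exfalso. apply h. constructor. apply ex_RInt_Reals_0. apply rex; auto. Qed.

Lemma circle_CI (f : Cplx -> Cplx) r :
  ccont (fun t => Cmul (f (gam r t)) (Cmul Ci (gam r t))) ->
  circle_integral f r = CI (fun t => Cmul (f (gam r t)) (Cmul Ci (gam r t))).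
Proof. intros Hc. unfold circle_integral, CI.
  assert (Hg : forall t, Cmul (RtoC r) (Cexp (0, t)) = gam r t).
  { intros t. unfold gam, Cexp, E; simpl. rewrite exp_0, !Rmult_1_l. auto. }
  unfold Defs.Re, Defs.Im. cbv zeta. apply injective_projections; cbn [fst snd].
  - rewrite RInt_eq. apply rint_ext. intros t; rewrite Hg; auto.
    intros t. eapply continuous_ext. 2: apply (proj1 (Hc t)). intros; cbv beta; rewrite Hg; auto.
  - rewrite RInt_eq. apply rint_ext. intros t; rewrite Hg; auto.
    intros t. eapply continuous_ext. 2: apply (proj2 (Hc t)). intros; cbv beta; rewrite Hg; auto.
Qed.

Lemma ccont_Cpow F k : ccont F -> ccont (fun t => Cpow (F t) k).
Proof. intros H; induction k; simpl. apply ccont_const. apply ccont_mul; auto. Qed.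

Lemma Cpow_gam z r t k : Cpow (Cmul z (gam r t)) k = Cmul (Cpow z k) (Cmul (RtoC (r^k)) (E (INR k * t))).
Proof. induction k; cbn [Cpow].
  - replace (INR 0 * t) with 0 by (simpl; ring). unfold E; rewrite cos_0, sin_0. cring.
  - rewrite IHk. assert (HE : E (INR (S k) * t) = Cmul (E t) (E (INR k * t))).
    { rewrite E_mul. f_equal. rewrite S_INR; ring. }
    rewrite HE. unfold gam. cring.
Qed.

Definition coef lam n k := if (k <? n)%nat then 0 else Gs lam (S n) (k - n) / INR (Factorial.fact k).
Definition Tn lam n z N := csum (fun k => Cmul (RtoC (coef lam n k)) (Cpow z k)) N.

Lemma max_abs_ge (lam : nat -> Cplx) n j : (j <= n)%nat -> Cnorm (lam j) <= max_abs lam n.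
Proof. induction n; intros Hj; simpl.
  - replace j with 0%nat by lia. lra.
  - destruct (Nat.eq_dec j (S n)). subst. apply Rmax_r.
    eapply Rle_trans. apply IHn; lia. apply Rmax_l. Qed.
Lemma max_abs_ge0 (lam : nat -> Cplx) n : 0 <= max_abs lam n.
Proof. eapply Rle_trans. apply Cnorm_ge0. apply (max_abs_ge lam n 0); lia. Qed.

Lemma csum_cmul c (f : nat -> Cplx) N : csum (fun k => Cmul c (f k)) N = Cmul c (csum f N).
Proof. induction N; simpl; auto. rewrite IHN. cring. Qed.

Lemma speed_unif (rho : R) (C : R) : 0 <= C -> forall eps, 0 < eps -> exists N0, forall N, (N0 <= N)%nat ->
  C * (rho ^ N / INR (Factorial.fact N)) <= eps.
Proof. intros HC eps He. destruct (cv_speed_pow_fact rho (eps / (C+1))) as [N0 HN0].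
  apply Rdiv_lt_0_compat; lra. exists N0. intros N HN. specialize (HN0 N HN).
  unfold R_dist in HN0. rewrite Rminus_0_r in HN0.
  apply Rle_trans with (C * (eps / (C+1))).
  apply Rmult_le_compat_l; auto. apply Rlt_le. eapply Rle_lt_trans. apply Rle_abs. auto.
  apply Rmult_le_reg_r with (C+1). lra. replace (C * (eps / (C + 1)) * (C + 1)) with (C * eps) by (field; lra). nra. Qed.

Lemma term_CI lam n r z k : 0 < r -> Hyp lam r (S n) ->
  CI (fun t => Cmul (Cmul (RtoC (/ INR (Factorial.fact k))) (Cpow (Cmul z (gam r t)) k))
                    (Cmul (gam r t) (Dinv lam r (S n) t)))
  = Cmul (RtoC (2*PI)) (Cmul (RtoC (coef lam n k)) (Cpow z k)).
Proof.
  intros Hr Hy.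
  rewrite (CI_ext _ (fun t => Cmul (Cmul (RtoC (/ INR (Factorial.fact k) * r^(S k))) (Cpow z k))
                                   (Cmul (E (IZR (Z.of_nat (S k)) * t)) (Dinv lam r (S n) t)))).
  2:{ intros t. rewrite Cpow_gam. unfold gam.
      assert (HE : E (IZR (Z.of_nat (S k)) * t) = Cmul (E (INR k * t)) (E t)).
      { rewrite E_mul. f_equal. rewrite <- INR_IZR_INZ, S_INR. ring. }
      rewrite HE. simpl pow. cring. }
  rewrite CI_cmul. 2:{ apply ccont_mul. apply ccont_E. apply ccont_Dinv; auto. }
  rewrite Dcoef by auto. unfold rval, coef.
  destruct (Nat.ltb_spec k n); destruct (Z.ltb_spec (Z.of_nat (S k)) (Z.of_nat (S n))); try lia.
  - cring.
  - replace (Z.to_nat (Z.of_nat (S k) - Z.of_nat (S n))) with (k - n)%nat by lia.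
    rewrite Nat2Z.id.
    assert (Hp : r ^ S k * (/ r) ^ S k = 1).
    { rewrite <- Rpow_mult_distr, Rinv_r, pow1; lra. }
    set (a := r ^ S k) in *. set (b := (/ r) ^ S k) in *.
    unfold Cmul, RtoC; cbn [fst snd]. f_equal.
    + transitivity (2 * PI * (Gs lam (S n) (k - n) / INR (Factorial.fact k)) * fst (Cpow z k) * (a * b)).
      unfold Rdiv; ring. rewrite Hp. ring.
    + transitivity (2 * PI * (Gs lam (S n) (k - n) / INR (Factorial.fact k)) * snd (Cpow z k) * (a * b)).
      unfold Rdiv; ring. rewrite Hp. ring.
Qed.

Lemma rearr X Y G : Cmul (Cmul X Y) (Cmul Ci G) = Cmul Ci (Cmul X (Cmul G Y)).
Proof. destruct X, Y, G; unfold Cmul, Ci; simpl; f_equal; ring. Qed.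

Lemma Phi_approx lam n z : (forall j, (j <= n)%nat -> 0 <= lam j) ->
  forall eps, 0 < eps -> exists N0, forall N, (N0 <= N)%nat ->
   Cnorm (Csub (Phi (fun j => RtoC (lam j)) n z) (Tn lam n z N)) <= eps.
Proof.
  intros Hl eps He.
  set (lamC := fun j => RtoC (lam j)).
  set (r := max_abs lamC n + 1).
  assert (HM := max_abs_ge0 lamC n).
  assert (Hr : 0 < r) by (unfold r; lra).
  assert (Hy : Hyp lam r (S n)).
  { intros j Hj. split. apply Hl; lia. pose proof (max_abs_ge lamC n j ltac:(lia)).
    change (Cnorm (lamC j)) with (Cnorm (RtoC (lam j))) in H. rewrite Cnorm_RtoC, Rabs_right in H by (apply Rle_ge, Hl; lia). unfold r. lra. }
  set (A := fun t => Cexp (Cmul z (gam r t))).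
  set (B := fun t => Cmul (gam r t) (Dinv lam r (S n) t)).
  set (phk := fun k t => Cmul (RtoC (/ INR (Factorial.fact k))) (Cpow (Cmul z (gam r t)) k)).
  assert (HA : ccont A). { apply ccont_Cexp. apply ccont_mul. apply ccont_const. apply ccont_gam. }
  assert (HB : ccont B). { apply ccont_mul. apply ccont_gam. apply ccont_Dinv; auto. }
  assert (Hphk : forall k, ccont (phk k)).
  { intros k. apply ccont_mul. apply ccont_const. apply ccont_Cpow. apply ccont_mul. apply ccont_const. apply ccont_gam. }
  assert (HBn : forall t, Cnorm (B t) <= r).
  { intros t. unfold B. rewrite Cnorm_mul, Cnorm_gam by lra. pose proof (Dinv_norm lam r (S n) t Hy).
    pose proof (Cnorm_ge0 (Dinv lam r (S n) t)). nra. }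
  set (rho := Cnorm z * r).
  assert (Hrho : 0 <= rho) by (unfold rho; pose proof (Cnorm_ge0 z); nra).
  assert (Hunif : forall e, 0 < e -> exists N0, forall N, (N0 <= N)%nat -> forall t,
     Cnorm (Csub (A t) (csum (fun k => phk k t) N)) <= e).
  { intros e He'. destruct (speed_unif rho (2 * exp rho * exp rho * rho)) with (eps := e) as [N0 HN0]; auto.
    pose proof (exp_pos rho). apply Rmult_le_pos; auto. nra.
    exists N0. intros N HN t. specialize (HN0 N HN).
    assert (Hu : Cnorm (Cmul z (gam r t)) = rho) by (unfold rho; rewrite Cnorm_mul, Cnorm_gam; lra).
    eapply Rle_trans. apply (exp_approx (Cmul z (gam r t)) N). rewrite Hu.
    eapply Rle_trans. 2: apply HN0. right. simpl pow. unfold Rdiv. ring. }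
  assert (Hpi : 0 < 2 * PI) by (pose proof PI_RGT_0; lra).
  destruct (KL A B phk r HA HB Hphk HBn Hunif (2*PI*eps) ltac:(nra)) as [N0 HN0].
  exists N0. intros N HN. specialize (HN0 N HN).
  assert (HPhi : Phi lamC n z = Cmul (RtoC (/ (2*PI))) (CI (fun t => Cmul (A t) (B t)))).
  { unfold Phi. rewrite circle_CI.
    2:{ apply (ccont_ext (fun t => Cmul Ci (Cmul (A t) (B t)))).
        intros t. unfold Cdiv, lamC. rewrite prod_lin_prodl. unfold A, B, Dinv. symmetry; apply rearr.
        apply ccont_mul; [apply ccont_const| apply ccont_mul; auto]. }
    rewrite (CI_ext _ (fun t => Cmul Ci (Cmul (A t) (B t)))).
    2:{ intros t. unfold Cdiv, lamC. rewrite prod_lin_prodl. unfold A, B, Dinv. apply rearr. }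
    rewrite CI_cmul by (apply ccont_mul; auto). rewrite <- Cmul_assoc. f_equal.
    unfold Defs.Cinv, Ci, Cmul, RtoC; simpl. f_equal; field; lra. }
  fold lamC. rewrite HPhi.
  assert (HT : csum (fun k => CI (fun t => Cmul (phk k t) (B t))) N = Cmul (RtoC (2*PI)) (Tn lam n z N)).
  { unfold Tn. rewrite <- csum_cmul. apply csum_ext. intros k _. unfold phk, B. apply term_CI; auto. }
  rewrite HT in HN0.
  replace (Csub (Cmul (RtoC (/ (2 * PI))) (CI (fun t => Cmul (A t) (B t)))) (Tn lam n z N))
    with (Cmul (RtoC (/ (2 * PI))) (Csub (CI (fun t => Cmul (A t) (B t))) (Cmul (RtoC (2 * PI)) (Tn lam n z N)))).
  2:{ unfold Cmul, Csub, RtoC; simpl. f_equal; field; lra. }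
  rewrite Cnorm_mul, Cnorm_RtoC, Rabs_right by (apply Rle_ge; left; apply Rinv_0_lt_compat; lra).
  apply Rmult_le_reg_l with (2*PI). lra. rewrite <- Rmult_assoc, Rinv_r, Rmult_1_l by lra. lra.
Qed.

Lemma Gs_zero lam m : Gs lam m 0 = 1.
Proof. induction m; simpl; auto. rewrite IHm. ring. Qed.
Lemma Gs_mono lam mu m : (forall j, (j < m)%nat -> 0 <= lam j <= mu j) ->
  forall q, 0 <= Gs lam m q <= Gs mu m q.
Proof. induction m; intros H q; simpl.
  - destruct (Nat.eqb q 0); lra.
  - assert (IH := IHm ltac:(intros j Hj; apply H; lia)). assert (Hm := H m ltac:(lia)).
    split.
    + apply cond_pos_sum. intros k. apply Rmult_le_pos. apply pow_le; lra. apply IH.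
    + apply sum_Rle. intros k _. apply Rmult_le_compat. apply pow_le; lra. apply IH.
      apply pow_incr; lra. apply IH. Qed.

Lemma coef_mono lam mu n k : (forall j, (j <= n)%nat -> 0 <= lam j <= mu j) ->
  0 <= coef lam n k <= coef mu n k.
Proof. intros H. unfold coef. destruct (Nat.ltb k n). lra.
  pose proof (INR_fact_lt_0 k). pose proof (Gs_mono lam mu (S n) ltac:(intros j Hj; apply H; lia) (k - n)).
  unfold Rdiv. assert (0 < / INR (Factorial.fact k)) by (apply Rinv_0_lt_compat; lra). nra. Qed.

Lemma Cpow_RtoC x k : Cpow (RtoC x) k = RtoC (x^k).
Proof. induction k; simpl; auto. rewrite IHk. cring. Qed.
Lemma Tn_real lam n x N : Tn lam n (RtoC x) N = RtoC (sum_f_R0 (fun k => coef lam n k * x^k) N).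
Proof. unfold Tn. rewrite <- csum_RtoC. apply csum_ext. intros k _. rewrite Cpow_RtoC. cring. Qed.
Lemma Cnorm_csum f N : Cnorm (csum f N) <= sum_f_R0 (fun k => Cnorm (f k)) N.
Proof. induction N; simpl. lra. eapply Rle_trans. apply Cnorm_add. lra. Qed.
Lemma Tn_norm lam n z N : (forall j, (j <= n)%nat -> 0 <= lam j) ->
  Cnorm (Tn lam n z N) <= sum_f_R0 (fun k => coef lam n k * Cnorm z ^ k) N.
Proof. intros H. eapply Rle_trans. apply Cnorm_csum. right. apply sum_eq. intros k _.
  rewrite Cnorm_mul, Cnorm_RtoC, Cnorm_Cpow, Rabs_right. auto.
  apply Rle_ge. apply (coef_mono lam lam). intros; split; auto; lra. Qed.
Lemma sum_ge_term f N j : (forall k, 0 <= f k) -> (j <= N)%nat -> f j <= sum_f_R0 f N.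
Proof. intros H. induction N; intros Hj; simpl.
  replace j with 0%nat by lia. lra.
  destruct (Nat.eq_dec j (S N)). subst. pose proof (cond_pos_sum f N H). lra.
  pose proof (IHN ltac:(lia)). pose proof (H (S N)). lra. Qed.

Lemma zero_of_small a : (forall eps, 0 < eps -> Rabs a <= eps) -> a = 0.
Proof. intros H. destruct (Req_dec a 0); auto. exfalso.
  pose proof (Rabs_pos_lt a H0). specialize (H (Rabs a / 2) ltac:(lra)). lra. Qed.
Lemma le_of_small a b : (forall eps, 0 < eps -> a <= b + 2 * eps) -> a <= b.
Proof. intros H. apply Rnot_lt_le; intros Hlt. specialize (H ((a - b)/4) ltac:(lra)). lra. Qed.

Theorem mainTheorem5 (n : nat) (lam mu : nat -> R)
  (H : forall j : nat, (j <= n)%nat -> 0 <= lam j /\ lam j <= mu j) :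
  (forall x : R, Im (Phi (fun j => RtoC (lam j)) n (RtoC x)) = 0) /\
  (forall x : R, 0 < x -> 0 < Re (Phi (fun j => RtoC (lam j)) n (RtoC x))) /\
  (forall z : Cplx,
     Cnorm (Phi (fun j => RtoC (lam j)) n z)
     <= Re (Phi (fun j => RtoC (mu j)) n (RtoC (Cnorm z)))).
Proof.
  assert (Hl : forall j, (j <= n)%nat -> 0 <= lam j) by (intros j Hj; apply H; auto).
  assert (Hm : forall j, (j <= n)%nat -> 0 <= mu j) by (intros j Hj; pose proof (H j Hj); lra).
  split; [|split].
  - intros x. unfold Defs.Im. apply zero_of_small. intros eps He.
    destruct (Phi_approx lam n (RtoC x) Hl eps He) as [N0 HN0].
    specialize (HN0 N0 (le_n _)). rewrite Tn_real in HN0.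
    eapply Rle_trans. 2: apply HN0. eapply Rle_trans. 2: apply Rabs_snd_le.
    unfold Csub, RtoC; simpl. rewrite Rminus_0_r. lra.
  - intros x Hx. unfold Defs.Re.
    set (c := x ^ n / INR (Factorial.fact n)).
    assert (Hc : 0 < c). { unfold c. apply Rdiv_lt_0_compat. apply pow_lt; auto. apply INR_fact_lt_0. }
    destruct (Phi_approx lam n (RtoC x) Hl (c/2) ltac:(lra)) as [N0 HN0].
    specialize (HN0 (Nat.max N0 n) ltac:(lia)). rewrite Tn_real in HN0.
    assert (Hs : c <= sum_f_R0 (fun k => coef lam n k * x ^ k) (Nat.max N0 n)).
    { replace c with (coef lam n n * x ^ n).
      apply (sum_ge_term (fun k => coef lam n k * x ^ k)).
      intros k. apply Rmult_le_pos. apply (coef_mono lam lam). intros; split; auto; lra.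
      apply pow_le; lra. lia.
      unfold coef, c. rewrite Nat.ltb_irrefl, Nat.sub_diag, Gs_zero. unfold Rdiv; ring. }
    set (P := Phi (fun j => RtoC (lam j)) n (RtoC x)) in *.
    set (sm := sum_f_R0 (fun k => coef lam n k * x ^ k) (Nat.max N0 n)) in *.
    pose proof (Rabs_fst_le (Csub P (RtoC sm))) as H0.
    change (fst (Csub P (RtoC sm))) with (fst P - sm) in H0.
    pose proof (Rle_abs (- (fst P - sm))) as H1. rewrite Rabs_Ropp in H1. lra.
  - intros z. apply le_of_small. intros eps He. unfold Defs.Re.
    destruct (Phi_approx lam n z Hl eps He) as [N1 HN1].
    destruct (Phi_approx mu n (RtoC (Cnorm z)) Hm eps He) as [N2 HN2].
    set (N := Nat.max N1 N2).
    specialize (HN1 N ltac:(unfold N; lia)). specialize (HN2 N ltac:(unfold N; lia)).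
    rewrite Tn_real in HN2.
    set (P1 := Phi (fun j => RtoC (lam j)) n z) in *.
    set (P2 := Phi (fun j => RtoC (mu j)) n (RtoC (Cnorm z))) in *.
    assert (Ht : Cnorm P1 <= Cnorm (Csub P1 (Tn lam n z N)) + Cnorm (Tn lam n z N)).
    { replace P1 with (Cadd (Csub P1 (Tn lam n z N)) (Tn lam n z N)) at 1 by
        (destruct P1, (Tn lam n z N); unfold Cadd, Csub; simpl; f_equal; ring).
      apply Cnorm_add. }
    assert (Hs : sum_f_R0 (fun k => coef lam n k * Cnorm z ^ k) N <= sum_f_R0 (fun k => coef mu n k * Cnorm z ^ k) N).
    { apply sum_Rle. intros k _. apply Rmult_le_compat_r. apply pow_le, Cnorm_ge0. apply coef_mono; auto. }
    pose proof (Tn_norm lam n z N Hl).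
    set (sm := sum_f_R0 (fun k => coef mu n k * Cnorm z ^ k) N) in *.
    pose proof (Rabs_fst_le (Csub P2 (RtoC sm))) as H1.
    change (fst (Csub P2 (RtoC sm))) with (fst P2 - sm) in H1.
    pose proof (Rle_abs (- (fst P2 - sm))) as H2. rewrite Rabs_Ropp in H2. lra.
Qed.
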